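(* Let $(X,Y)$ be a random vector with joint cumulative distribution function $H$, where $X$ and $Y$ take values in the non-negative integers, with zero-inflated marginal cdfs $F(s)=(1-\pi_F)+\pi_F\bar F(s)$ and $G(t)=(1-\pi_G)+\pi_G\bar G(t)$ for $s,t\ge 0$ (and $F(s)=G(t)=0$ for negative arguments), where $\bar F,\bar G$ are discrete distribution functions and $\pi_F,\pi_G\in[0,1]$. Let $(\tilde X_1,\tilde Y_1)$ and $(\tilde X_2,\tilde Y_2)$ be two independent copies of $(X,Y)$, and define Kendall's $\tau$ of $(X,Y)$ as $$\tau_A=\mathbb{P}[(\tilde X_1-\tilde X_2)(\tilde Y_1-\tilde Y_2)>0]-\mathbb{P}[(\tilde X_1-\tilde X_2)(\tilde Y_1-\tilde Y_2)<0].$$ Let $p_{00}=\mathbb{P}[X=0,Y=0]$, $p_{01}=\mathbb{P}[X=0,Y>0]$, $p_{10}=\mathbb{P}[X>0,Y=0]$, $p_{11}=\mathbb{P}[X>0,Y>0]$. Let $X_{10}$ and $X_{11}$ be independent random variables, with $X_{10}$ distributed as $X$ conditionally on $\{X>0,Y=0\}$ and $X_{11}$ distributed as $X$ conditionally on $\{X>0,Y>0\}$; let $Y_{01}$ and $Y_{11}$ be independent random variables, with $Y_{01}$ distributed as $Y$ conditionally on $\{X=0,Y>0\}$ and $Y_{11}$ distributed as $Y$ conditionally on $\{X>0,Y>0\}$. Set $p_1^{\ast}=\mathbb{P}[X_{10}>X_{11}]$, $p_2^{\ast}=\mathbb{P}[Y_{01}>Y_{11}]$, $p_1^{\dagger}=\mathbb{P}[X_{10}=X_{11}]$,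 $p_2^{\dagger}=\mathbb{P}[Y_{01}=Y_{11}]$, and let $\tau_{11}$ be Kendall's $\tau$ (probability of concordance minus probability of discordance of two independent copies) of the conditional distribution of $(X,Y)$ given $\{X>0,Y>0\}$. Then $$\tau_A=p_{11}^2\tau_{11}+2(p_{00}p_{11}-p_{01}p_{10})+2p_{11}\big[p_{10}(1-2p_1^{\ast}-p_1^{\dagger})+p_{01}(1-2p_2^{\ast}-p_2^{\dagger})\big].$$
   Context: Conditional quantities (such as $p_1^\ast,p_1^\dagger,\tau_{11}$) are only defined when the conditioning event has positive probability; when a conditioning event has probability zero, the term in which the corresponding quantity appears is multiplied by a zero probability and is interpreted as $0$. *)

(* Defs.v *)
(* discrete laws on N x N given by probability mass
   functions; probabilities of events are (countable) sums via esum. *)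
From HB Require Import structures.
From mathcomp Require Import all_boot all_order all_algebra.
From mathcomp Require Import all_classical all_reals all_analysis.
Set Implicit Arguments. Unset Strict Implicit. Unset Printing Implicit Defensive.
Import Order.TTheory GRing.Theory Num.Theory.
Local Open Scope classical_set_scope.
Local Open Scope ring_scope.

Section Defs.
Variable R : realType.

Definition is_pmf (T : choiceType) (p : T -> R) : Prop :=
  (forall i, 0 <= p i) /\ (\esum_(i in [set: T]) (p i)%:E = 1%E).

Definition Pr (T : choiceType) (p : T -> R) (A : set T) : R :=
  fine (\esum_(i in A) (p i)%:E).

(* probability of an event B for a pair of independent variables with
   mass functions p and q (product law) *)
Definition Pr2 (T U : choiceType) (p : T -> R) (q : U -> R) (B : set (T * U)) : R :=
  fine (\esum_(z in B) (p z.1 * q z.2)%:E).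

(* conditional mass function of p given A; identically 0 if P[A] = 0 *)
Definition cond (T : choiceType) (p : T -> R) (A : set T) : T -> R :=
  fun i => if `[< A i >] then p i / Pr p A else 0.

Definition kendall_tau (p : nat * nat -> R) : R :=
  Pr2 p p [set z | 0 < ((z.1.1)%:R - (z.2.1)%:R) * ((z.1.2)%:R - (z.2.2)%:R) :> R]
  - Pr2 p p [set z | ((z.1.1)%:R - (z.2.1)%:R) * ((z.1.2)%:R - (z.2.2)%:R) < 0 :> R].

Definition cdfX (p : nat * nat -> R) (s : nat) : R :=
  Pr p [set z | (z.1 <= s)%N].
Definition cdfY (p : nat * nat -> R) (t : nat) : R :=
  Pr p [set z | (z.2 <= t)%N].

Definition cdf1 (q : nat -> R) (s : nat) : R := Pr q [set k | (k <= s)%N].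

Definition zero_inflated (F : nat -> R) : Prop :=
  exists (pi : R) (q : nat -> R), 0 <= pi <= 1 /\ is_pmf q /\
    forall s, F s = (1 - pi) + pi * cdf1 q s.

Definition A00 : set (nat * nat) := [set z | z.1 = 0%N /\ z.2 = 0%N].
Definition A01 : set (nat * nat) := [set z | z.1 = 0%N /\ (0 < z.2)%N].
Definition A10 : set (nat * nat) := [set z | (0 < z.1)%N /\ z.2 = 0%N].
Definition A11 : set (nat * nat) := [set z | (0 < z.1)%N /\ (0 < z.2)%N].

End Defs.

(* Main.v *)
Require Import Defs.
From HB Require Import structures.
From mathcomp Require Import all_boot all_order all_algebra.
From mathcomp Require Import all_classical all_reals all_analysis.
From mathcomp Require Import ring lra zify.
Import Order.TTheory GRing.Theory Num.Theory.
Local Open Scope classical_set_scope.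
Local Open Scope ring_scope.
Set Implicit Arguments. Unset Strict Implicit.

Lemma esumZl (R : realType) (T : choiceType) (I : set T) (a : T -> \bar R) (r : R) :
  (0 <= r) -> (forall i, (0 <= a i)%E) ->
  \esum_(i in I) (r%:E * a i)%E = (r%:E * \esum_(i in I) a i)%E.
Proof.
move=> r0 a0; rewrite /esum -ereal_supZl//; last first.
  by apply/set0P; exists 0%E; exists set0; [exact: fsets_set0| rewrite fsbig_set0].
rewrite image_comp; congr ereal_sup; apply: eq_imagel => A _ /=.
by rewrite ge0_mule_fsumr.
Qed.

Lemma fine_mulEFin (R : realType) (k : R) (x : \bar R) :
  fine (k%:E * x)%E = k * fine x.
Proof.
case: x => [r| |] /=; first by [].
- by rewrite mulr_infty; case: sgrP => _; rewrite ?mul1e ?mul0e ?mulN1e /= ?mulr0.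
- by rewrite mulr_infty; case: sgrP => _; rewrite ?mul1e ?mul0e ?mulN1e /= ?mulr0.
Qed.

Lemma E_fin (R : realType) (T : choiceType) (f : T -> R) (c : R) :
  (forall i, 0 <= f i) -> \esum_(i in [set: T]) (f i)%:E = c%:E ->
  forall A, \esum_(i in A) (f i)%:E = (Pr f A)%:E.
Proof.
move=> f0 fT A; rewrite /Pr fineK// ge0_fin_numE; last by apply: esum_ge0 => i _; rewrite lee_fin.
apply: (@le_lt_trans _ _ c%:E); last exact: ltry.
rewrite -fT esum_mkcond; apply: le_esum => i _; case: ifP => _ //.
by rewrite lee_fin.
Qed.

Lemma Pr_ge0 (R : realType) (T : choiceType) (f : T -> R) A :
  (forall i, 0 <= f i) -> 0 <= Pr f A.
Proof. by move=> f0; apply: fine_ge0; apply: esum_ge0 => i _; rewrite lee_fin. Qed.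

Lemma Pr_le (R : realType) (T : choiceType) (f : T -> R) (c : R) :
  (forall i, 0 <= f i) -> \esum_(i in [set: T]) (f i)%:E = c%:E ->
  forall A B, A `<=` B -> Pr f A <= Pr f B.
Proof.
move=> f0 fT A B AB; rewrite -lee_fin -!(E_fin f0 fT) esum_mkcond [X in (_ <= X)%E]esum_mkcond.
apply: le_esum => i _; case: ifP => iA; first by rewrite ifT// inE; apply: AB; rewrite -inE.
by case: ifP => _ //; rewrite lee_fin.
Qed.

Lemma Pr_ext (R : realType) (T : choiceType) (f : T -> R) A B :
  (forall z, A z <-> B z) -> Pr f A = Pr f B.
Proof. by move=> AB; congr Pr; apply/seteqP; split => z /AB. Qed.

Lemma Pr_split (R : realType) (T : choiceType) (f : T -> R) (c : R) :
  (forall i, 0 <= f i) -> \esum_(i in [set: T]) (f i)%:E = c%:E ->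
  forall A B C, (forall z, A z <-> B z \/ C z) -> (forall z, B z -> C z -> False) ->
  Pr f A = Pr f B + Pr f C.
Proof.
move=> f0 fT A B C hA hBC; apply: EFin_inj; rewrite EFinD -!(E_fin f0 fT).
rewrite (esumID B A); last by move=> i _; rewrite lee_fin.
congr (_ + _)%E; congr esum; apply/seteqP; split => z /=.
- by case.
- by move=> Bz; split => //; apply/hA; left.
- by case=> /hA [//|//].
- by move=> Cz; split; [apply/hA; right| move=> Bz; apply: hBC Bz Cz].
Qed.

Lemma E_prod (R : realType) (T1 T2 : choiceType) (p : T1 -> R) (q : T2 -> R) (c d : R) :
  (forall i, 0 <= p i) -> \esum_(i in [set: T1]) (p i)%:E = c%:E ->
  (forall i, 0 <= q i) -> \esum_(i in [set: T2]) (q i)%:E = d%:E ->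
  forall A B, \esum_(z in A `*` B) (p z.1 * q z.2)%:E = (Pr p A * Pr q B)%:E.
Proof.
move=> p0 pT q0 qT A B.
transitivity (\esum_(i in A) \esum_(j in B) (p i * q j)%:E)%E.
  symmetry; apply: (@esum_esum R T1 T2 A (fun _ => B) (fun i j => (p i * q j)%:E)).
  by move=> i j _ _; rewrite lee_fin mulr_ge0.
transitivity (\esum_(i in A) ((Pr q B)%:E * (p i)%:E))%E.
  apply: eq_esum => i _.
  under eq_esum do rewrite EFinM.
  rewrite (@esumZl R T2 B (fun j => (q j)%:E) (p i) (p0 i)); last by move=> j; rewrite lee_fin.
  by rewrite (E_fin q0 qT) muleC.
rewrite (@esumZl R T1 A (fun i => (p i)%:E) (Pr q B)); last 2 first.
- exact: Pr_ge0.
- by move=> i; rewrite lee_fin.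
by rewrite (E_fin p0 pT) -EFinM mulrC.
Qed.

Lemma Pr2_tot (R : realType) (T1 T2 : choiceType) (p : T1 -> R) (q : T2 -> R) :
  is_pmf p -> is_pmf q ->
  \esum_(z in [set: T1 * T2]) (p z.1 * q z.2)%:E = 1%:E.
Proof.
move=> [p0 pT] [q0 qT]; rewrite -setXTT (E_prod p0 pT q0 qT).
by rewrite /Pr pT qT /= mulr1.
Qed.

Lemma Pr2E (R : realType) (T1 T2 : choiceType) (p : T1 -> R) (q : T2 -> R) B :
  Pr2 p q B = Pr (fun z => p z.1 * q z.2) B.
Proof. by []. Qed.

Lemma Pr2_cond (R : realType) (p : nat * nat -> R) A B S :
  (forall i, 0 <= p i) ->
  Pr2 (cond p A) (cond p B) S = Pr2 p p (S `&` (A `*` B)) / (Pr p A * Pr p B).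
Proof.
move=> p0; rewrite /Pr2.
transitivity (fine (((Pr p A)^-1 * (Pr p B)^-1)%:E *
   \esum_(z in S) (if z \in A `*` B then (p z.1 * p z.2)%:E else 0))%E).
  congr fine; rewrite -esumZl; last first.
  - by move=> z; case: ifP => _ //; rewrite lee_fin mulr_ge0.
  - by rewrite mulr_ge0 // invr_ge0 Pr_ge0.
  apply: eq_esum => z _; rewrite /cond.
  case: (asboolP (A z.1)) => Az; case: (asboolP (B z.2)) => Bz.
  - rewrite ifT; last by apply/mem_set; split.
    by rewrite -EFinM mulrACA mulrC.
  - by rewrite ifF ?mulr0 ?mule0//; apply/negbTE/negP => /set_mem [] *; tauto.
  - by rewrite ifF ?mul0r ?mule0//; apply/negbTE/negP => /set_mem [] *; tauto.
  - by rewrite ifF ?mul0r ?mule0//; apply/negbTE/negP => /set_mem [] *; tauto.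
by rewrite fine_mulEFin -esum_mkcondr mulrC invfM.
Qed.

Lemma cond_mul (R : realType) (p : nat * nat -> R) A B S :
  is_pmf p ->
  Pr p A * Pr p B * Pr2 (cond p A) (cond p B) S = Pr2 p p (S `&` (A `*` B)).
Proof.
move=> hp; have [p0 pT] := hp.
rewrite Pr2_cond//; have [h|h] := eqVneq (Pr p A * Pr p B) 0; last first.
  by rewrite mulrC divfK.
have f0 : forall z : (nat * nat) * (nat * nat), 0 <= p z.1 * p z.2.
  by move=> z; apply: mulr_ge0; apply: p0.
have fT := Pr2_tot hp hp.
rewrite h mul0r Pr2E; apply/le_anti/andP; split; first exact: (@Pr_ge0 _ _ (fun z : (nat * nat) * (nat * nat) => p z.1 * p z.2) _ f0).
rewrite -h -lee_fin -(E_prod p0 pT p0 pT) (@E_fin _ _ (fun z : (nat * nat) * (nat * nat) => p z.1 * p z.2) _ f0 fT) lee_fin.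
by apply: (@Pr_le _ _ (fun z : (nat * nat) * (nat * nat) => p z.1 * p z.2) _ f0 fT) => z [].
Qed.

Lemma Pr2_swap (R : realType) (p : nat * nat -> R) B B' :
  (forall z, B' z <-> B (z.2, z.1)) -> Pr2 p p B = Pr2 p p B'.
Proof.
move=> hB; rewrite /Pr2 (@reindex_esum R _ _ B' B (fun z => (z.2, z.1))).
  by congr fine; apply: eq_esum => z _ /=; rewrite mulrC.
split.
- by move=> z /hB.
- by move=> [a b] [c d] _ _ /= [-> ->].
- by move=> [a b] Bz; exists (b, a) => //; apply/hB.
Qed.

Ltac signs :=
  split => H; [ (lia || (exfalso; nra)) | (nra || (exfalso; lia)) ].

Lemma conc_iff (R : realType) (a b c d : nat) :
  (0 < (a%:R - b%:R) * (c%:R - d%:R) :> R) <->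
  ((a < b)%N /\ (c < d)%N \/ (b < a)%N /\ (d < c)%N).
Proof.
have E1 : forall m n : nat, (m < n)%N -> (m%:R < n%:R :> R) by move=> m n; rewrite ltr_nat.
case: (ltngtP a b) => hab; case: (ltngtP c d) => hcd;
  try (have h1 := E1 _ _ hab); try (have h2 := E1 _ _ hcd); subst; signs.
Qed.

Lemma disc_iff (R : realType) (a b c d : nat) :
  ((a%:R - b%:R) * (c%:R - d%:R) < 0 :> R) <->
  ((a < b)%N /\ (d < c)%N \/ (b < a)%N /\ (c < d)%N).
Proof.
have E1 : forall m n : nat, (m < n)%N -> (m%:R < n%:R :> R) by move=> m n; rewrite ltr_nat.
case: (ltngtP a b) => hab; case: (ltngtP c d) => hcd;
  try (have h1 := E1 _ _ hab); try (have h2 := E1 _ _ hcd); subst; signs.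
Qed.

Lemma Pr_U (R : realType) (T : choiceType) (f : T -> R) (c : R) :
  (forall i, 0 <= f i) -> \esum_(i in [set: T]) (f i)%:E = c%:E ->
  forall B C, (forall z, B z -> C z -> False) ->
  Pr f (B `|` C) = Pr f B + Pr f C.
Proof. by move=> f0 fT B C hBC; apply: (Pr_split f0 fT) => // z; split. Qed.

Lemma eqnE' (a b : nat) : (a = b) <-> (a == b).
Proof. exact: rwP eqP. Qed.

Ltac dec := let z := fresh "z" in move=> z;
  rewrite /setI /setU /setX /A00 /A01 /A10 /A11 /= ?conc_iff ?disc_iff ?eqnE' ?eqn0Ngt;
  case: z => [[[|?] [|?]] [[|?] [|?]]];
  rewrite ?ltnn ?ltn0 ?ltn0Sn ?ltnS ?eqSS ?eqxx /=;
  repeat (match goal with |- context [(?a < ?b)%N] => case: (ltngtP a b) => _ end;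
          rewrite ?ltnn ?eqxx /=);
  rewrite /is_true; intuition (try discriminate).

Unset Implicit Arguments.

Theorem theorem1 (R : realType) (p : nat * nat -> R) :
  is_pmf p ->
  zero_inflated (cdfX p) ->
  zero_inflated (cdfY p) ->
  let p00 := Pr p A00 in
  let p01 := Pr p A01 in
  let p10 := Pr p A10 in
  let p11 := Pr p A11 in
  let c10 := cond p A10 in
  let c01 := cond p A01 in
  let c11 := cond p A11 in
  let p1s := Pr2 c10 c11 [set z | (z.2.1 < z.1.1)%N] in
  let p2s := Pr2 c01 c11 [set z | (z.2.2 < z.1.2)%N] in
  let p1d := Pr2 c10 c11 [set z | z.1.1 = z.2.1] in
  let p2d := Pr2 c01 c11 [set z | z.1.2 = z.2.2] in
  let tau11 := kendall_tau c11 in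
  kendall_tau p =
    p11 ^+ 2 * tau11 + 2 * (p00 * p11 - p01 * p10)
    + 2 * p11 * (p10 * (1 - 2 * p1s - p1d) + p01 * (1 - 2 * p2s - p2d)).
Proof.
move=> hp _ _ p00 p01 p10 p11 c10 c01 c11 p1s p2s p1d p2d tau11.
have [p0 pT] := hp.
pose f2 := fun z : (nat * nat) * (nat * nat) => p z.1 * p z.2.
have hf2 : forall z, 0 <= f2 z by move=> z; rewrite mulr_ge0.
have hT2 : \esum_(i in [set: (nat * nat) * (nat * nat)]) (f2 i)%:E = 1%:E by exact: Pr2_tot.
pose Cc : set ((nat * nat) * (nat * nat)) :=
  [set z | 0 < ((z.1.1)%:R - (z.2.1)%:R) * ((z.1.2)%:R - (z.2.2)%:R) :> R].
pose Dd : set ((nat * nat) * (nat * nat)) :=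
  [set z | ((z.1.1)%:R - (z.2.1)%:R) * ((z.1.2)%:R - (z.2.2)%:R) < 0 :> R].
pose Xlt : set ((nat * nat) * (nat * nat)) := [set z | (z.1.1 < z.2.1)%N].
pose Xgt : set ((nat * nat) * (nat * nat)) := [set z | (z.2.1 < z.1.1)%N].
pose Xeq : set ((nat * nat) * (nat * nat)) := [set z | z.1.1 = z.2.1].
pose Ylt : set ((nat * nat) * (nat * nat)) := [set z | (z.1.2 < z.2.2)%N].
pose Ygt : set ((nat * nat) * (nat * nat)) := [set z | (z.2.2 < z.1.2)%N].
pose Yeq : set ((nat * nat) * (nat * nat)) := [set z | z.1.2 = z.2.2].
have -> : kendall_tau p = Pr2 p p Cc - Pr2 p p Dd by [].
have Et : tau11 = Pr2 c11 c11 Cc - Pr2 c11 c11 Dd by [].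
have U := Pr_U hf2 hT2.
have F1 : Pr2 p p Cc = Pr2 p p (Cc `&` (A11 `*` A11)) + (Pr2 p p (A00 `*` A11) +
   (Pr2 p p (A11 `*` A00) + (Pr2 p p (Ylt `&` (A01 `*` A11)) + (Pr2 p p (Ygt `&` (A11 `*` A01))
   + (Pr2 p p (Xlt `&` (A10 `*` A11)) + Pr2 p p (Xgt `&` (A11 `*` A10))))))).
  rewrite !Pr2E -!U; try by dec.
  by apply: Pr_ext; rewrite /Cc /Xlt /Xgt /Ylt /Ygt; dec.
have F2 : Pr2 p p Dd = Pr2 p p (Dd `&` (A11 `*` A11)) + (Pr2 p p (A01 `*` A10) +
   (Pr2 p p (A10 `*` A01) + (Pr2 p p (Ygt `&` (A01 `*` A11)) + (Pr2 p p (Ylt `&` (A11 `*` A01))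
   + (Pr2 p p (Xgt `&` (A10 `*` A11)) + Pr2 p p (Xlt `&` (A11 `*` A10))))))).
  rewrite !Pr2E -!U; try by dec.
  by apply: Pr_ext; rewrite /Dd /Xlt /Xgt /Ylt /Ygt; dec.
have S1 : Pr2 p p (A11 `*` A00) = Pr2 p p (A00 `*` A11).
  by apply: Pr2_swap; dec.
have S2 : Pr2 p p (A10 `*` A01) = Pr2 p p (A01 `*` A10).
  by apply: Pr2_swap; dec.
have S3 : Pr2 p p (Ygt `&` (A11 `*` A01)) = Pr2 p p (Ylt `&` (A01 `*` A11)).
  by apply: Pr2_swap; rewrite /Ylt /Ygt; dec.
have S4 : Pr2 p p (Ylt `&` (A11 `*` A01)) = Pr2 p p (Ygt `&` (A01 `*` A11)).
  by apply: Pr2_swap; rewrite /Ylt /Ygt; dec.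
have S5 : Pr2 p p (Xgt `&` (A11 `*` A10)) = Pr2 p p (Xlt `&` (A10 `*` A11)).
  by apply: Pr2_swap; rewrite /Xlt /Xgt; dec.
have S6 : Pr2 p p (Xlt `&` (A11 `*` A10)) = Pr2 p p (Xgt `&` (A10 `*` A11)).
  by apply: Pr2_swap; rewrite /Xlt /Xgt; dec.
have P1 : Pr2 p p (A00 `*` A11) = p00 * p11.
  by apply: EFin_inj; rewrite -(E_prod p0 pT p0 pT) (E_fin hf2 hT2).
have P2 : Pr2 p p (A01 `*` A10) = p01 * p10.
  by apply: EFin_inj; rewrite -(E_prod p0 pT p0 pT) (E_fin hf2 hT2).
have P3 : p01 * p11 = Pr2 p p (Ylt `&` (A01 `*` A11)) + (Pr2 p p (Yeq `&` (A01 `*` A11))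
    + Pr2 p p (Ygt `&` (A01 `*` A11))).
  have -> : p01 * p11 = Pr2 p p (A01 `*` A11).
    by apply: EFin_inj; rewrite -(E_prod p0 pT p0 pT) (E_fin hf2 hT2).
  rewrite !Pr2E -!U; try by rewrite /Ylt /Ygt /Yeq; dec.
  by apply: Pr_ext; rewrite /Ylt /Ygt /Yeq; dec.
have P4 : p10 * p11 = Pr2 p p (Xlt `&` (A10 `*` A11)) + (Pr2 p p (Xeq `&` (A10 `*` A11))
    + Pr2 p p (Xgt `&` (A10 `*` A11))).
  have -> : p10 * p11 = Pr2 p p (A10 `*` A11).
    by apply: EFin_inj; rewrite -(E_prod p0 pT p0 pT) (E_fin hf2 hT2).
  rewrite !Pr2E -!U; try by rewrite /Xlt /Xgt /Xeq; dec.
  by apply: Pr_ext; rewrite /Xlt /Xgt /Xeq; dec.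
have T1 : p11 * p11 * tau11 = Pr2 p p (Cc `&` (A11 `*` A11)) - Pr2 p p (Dd `&` (A11 `*` A11)).
  by rewrite Et mulrBr !cond_mul.
have T2 : p01 * p11 * p2s = Pr2 p p (Ygt `&` (A01 `*` A11)) by exact: cond_mul.
have T3 : p01 * p11 * p2d = Pr2 p p (Yeq `&` (A01 `*` A11)) by exact: cond_mul.
have T4 : p10 * p11 * p1s = Pr2 p p (Xgt `&` (A10 `*` A11)) by exact: cond_mul.
have T5 : p10 * p11 * p1d = Pr2 p p (Xeq `&` (A10 `*` A11)) by exact: cond_mul.
have -> : 2 * p11 * (p10 * (1 - 2 * p1s - p1d) + p01 * (1 - 2 * p2s - p2d)) =
  2 * (p10 * p11 - 2 * (p10 * p11 * p1s) - p10 * p11 * p1d) +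
  2 * (p01 * p11 - 2 * (p01 * p11 * p2s) - p01 * p11 * p2d) by ring.
rewrite expr2 T1 T2 T3 T4 T5 P3 P4 -P1 -P2 F1 F2 S1 S2 S3 S4 S5 S6.
lra.
Qed.
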